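(* A $\rho$-shifted weight $\lambda\in X+\rho$ is called atypical if $(\lambda,\beta)=0$ for some $\beta\in\{\delta\pm\epsilon_i:i=1,2,3\}$. For $k\in\mathbb N$ let $\mathrm{WT}_k=\{\sigma(f_{k,n}):\sigma\in W,\ n\in\mathbb N\}$. Then the sets $\mathrm{WT}_k$ ($k\in\mathbb N$) are pairwise disjoint and their union is exactly the set of atypical weights in $X+\rho$; in particular every atypical weight is $W$-conjugate to some $f_{k,n}$.
   Context: $\mathfrak g=G(3)$, the 31-dimensional exceptional simple complex Lie superalgebra with $\mathfrak g_{\bar0}=G_2\oplus\mathfrak{sl}_2$. The dual $\mathfrak h^*$ of its Cartan subalgebra is spanned by $\delta,\epsilon_1,\epsilon_2,\epsilon_3$ subject to $\epsilon_1+\epsilon_2+\epsilon_3=0$, with bilinear form $(\delta,\delta)=-2$, $(\delta,\epsilon_i)=0$, $(\epsilon_i,\epsilon_i)=2$, $(\epsilon_i,\epsilon_j)=-1$ ($i\ne j$). Simple roots $\epsilon_2-\epsilon_1,\ \epsilon_1,\ \delta+\epsilon_3$; positive even roots $2\delta,\epsilon_1,\epsilon_2,-\epsilon_3,\epsilon_2-\epsilon_1,\epsilon_1-\epsilon_3,\epsilon_2-\epsilon_3$; positive odd roots $\delta,\ \delta\pm\epsilon_i$ ($i=1,2,3$). $\rho=-\tfrac52\delta+2\epsilon_1+3\epsilon_2$, and $X=\mathbb Z\delta\oplus\mathbb Z\epsilon_1\oplus\mathbb Z\epsilon_2$ is the integral weight lattice. The Weyl group $W=\langle s_0\rangle\times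 W_2$ acts linearly on $\mathfrak h^*$: $s_0$ sends $\delta\mapsto-\delta$ and fixes the $\epsilon_i$; $W_2$ (Weyl group of $G_2$, dihedral of order 12) fixes $\delta$ and is generated by $s_1$ (swaps $\epsilon_1,\epsilon_2$, fixes $\epsilon_3$) and $s_2$ ($\epsilon_1\mapsto-\epsilon_1$, $\epsilon_2\mapsto-\epsilon_3$, $\epsilon_3\mapsto-\epsilon_2$). For $k,n\in\mathbb N$ the anti-dominant weights $f_{k,n}\in X+\rho$ are: $f_{k,n}=-\tfrac{2n+1}{2}\delta-(n+k+1)\epsilon_1-(2k+1)\epsilon_2$ for $0\le n\le k-1$; $f_{k,k}=-\tfrac{2k+1}{2}\delta-(2k+1)\epsilon_1-(2k+1)\epsilon_2$; $f_{k,n}=-\tfrac{2n+1}{2}\delta-(2k+1)\epsilon_1-(n+k+1)\epsilon_2$ for $k+1\le n\le 3k$; $f_{k,3k+1}=-\tfrac{6k+3}{2}\delta-(2k+1)\epsilon_1-(4k+2)\epsilon_2$; $f_{k,n}=-\tfrac{2n+1}{2}\delta-(n-k)\epsilon_1-(n+k+1)\epsilon_2$ for $n\ge 3k+2$. *)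

(* Defs.v *)
From HB Require Import structures.
From mathcomp Require Import all_boot all_order all_algebra.
Set Implicit Arguments. Unset Strict Implicit. Unset Printing Implicit Defensive.
Import Order.TTheory GRing.Theory Num.Theory.
Local Open Scope ring_scope.

(* An element of the dual of h is written  d*delta + e1*eps1 + e2*eps2  (eps3 = -eps1-eps2),
   encoded as the triple (d, e1, e2) of rationals. *)
Record wt := Wt { wd : rat; we1 : rat; we2 : rat }.

Definition wadd (x y : wt) := Wt (wd x + wd y) (we1 x + we1 y) (we2 x + we2 y).
Definition wopp (x : wt) := Wt (- wd x) (- we1 x) (- we2 x).

Definition delta : wt := Wt 1 0 0.
Definition eps1 : wt := Wt 0 1 0.
Definition eps2 : wt := Wt 0 0 1.
Definition eps3 : wt := Wt 0 (-1) (-1).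

(* bilinear form: (delta,delta)=-2, (delta,eps_i)=0, (eps_i,eps_i)=2, (eps_i,eps_j)=-1 *)
Definition form (x y : wt) : rat :=
  - 2 * wd x * wd y + 2 * we1 x * we1 y + 2 * we2 x * we2 y
  - we1 x * we2 y - we2 x * we1 y.

Definition rho : wt := Wt (- (5%:R / 2%:R)) 2 3.

Definition is_int (q : rat) : Prop := exists z : int, q = z%:~R.

Definition inX (x : wt) : Prop := [/\ is_int (wd x), is_int (we1 x) & is_int (we2 x)].
Definition inXrho (x : wt) : Prop := inX (wadd x (wopp rho)).

Definition atypical (x : wt) : Prop :=
  exists (i : 'I_3) (sgn : bool),
    let e := nth eps1 [:: eps1; eps2; eps3] i in
    form x (wadd delta (if sgn then e else wopp e)) = 0.

Definition s0 (x : wt) : wt := Wt (- wd x) (we1 x) (we2 x).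
Definition s1 (x : wt) : wt := Wt (wd x) (we2 x) (we1 x).
(* s2: eps1 -> -eps1, eps2 -> -eps3 = eps1 + eps2 *)
Definition s2 (x : wt) : wt := Wt (wd x) (we2 x - we1 x) (we2 x).

(* W = group generated by s0, s1, s2 (finite, so generated as a monoid) *)
Inductive inW : (wt -> wt) -> Prop :=
  | inW_id : inW id
  | inW_s0 f : inW f -> inW (s0 \o f)
  | inW_s1 f : inW f -> inW (s1 \o f)
  | inW_s2 f : inW f -> inW (s2 \o f).

Definition nr (n : nat) : rat := n%:R.

Definition f (k n : nat) : wt :=
  let d := - ((2 * nr n + 1) / 2%:R) in
  if (n < k)%N then Wt d (- (nr n + nr k + 1)) (- (2 * nr k + 1))
  else if n == k then Wt d (- (2 * nr k + 1)) (- (2 * nr k + 1))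
  else if (n <= 3 * k)%N then Wt d (- (2 * nr k + 1)) (- (nr n + nr k + 1))
  else if n == (3 * k).+1 then Wt (- ((6 * nr k + 3) / 2%:R)) (- (2 * nr k + 1)) (- (4 * nr k + 2))
  else Wt d (- (nr n - nr k)) (- (nr n + nr k + 1)).

Definition WT (k : nat) (x : wt) : Prop :=
  exists sigma n, inW sigma /\ x = sigma (f k n).

(* Main.v *)
Require Import Defs.
From mathcomp Require Import all_boot all_order all_algebra.
From mathcomp Require Import zify ring lra.
Import GRing.Theory Num.Theory.
Local Open Scope ring_scope.

Definition mk (D A B : int) : wt := Wt ((D%:~R : rat) / 2%:R) A%:~R B%:~R.

Lemma s0mk D A B : s0 (mk D A B) = mk (- D) A B.
Proof. by rewrite /s0 /mk /= intrN mulNr. Qed.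
Lemma s1mk D A B : s1 (mk D A B) = mk D B A.
Proof. by []. Qed.
Lemma s2mk D A B : s2 (mk D A B) = mk D (B - A) B.
Proof. by rewrite /s2 /mk /= intrB. Qed.

Lemma mk_inj D A B D' A' B' : mk D A B = mk D' A' B' -> [/\ D = D', A = A' & B = B'].
Proof.
rewrite /mk => -[h1 h2 h3]; split; try exact: (intr_inj (R := rat)).
apply: (intr_inj (R := rat)).
have : (D%:~R : rat) = D%:~R / 2%:R * 2%:R by field.
by rewrite h1 => ->; field.
Qed.

Definition O x := exists k, WT k x.

Lemma O_s0 x : O (s0 x) -> O x.
Proof.
move=> [k [sg [n [hs hx]]]]; exists k, (s0 \o sg), n; split; first by constructor.
by rewrite /= -hx; case: x {hx} => a b c; rewrite /s0 /= opprK.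
Qed.
Lemma O_s1 x : O (s1 x) -> O x.
Proof.
move=> [k [sg [n [hs hx]]]]; exists k, (s1 \o sg), n; split; first by constructor.
by rewrite /= -hx; case: x {hx}.
Qed.
Lemma O_s2 x : O (s2 x) -> O x.
Proof.
move=> [k [sg [n [hs hx]]]]; exists k, (s2 \o sg), n; split; first by constructor.
by rewrite /= -hx; case: x {hx} => a b c; rewrite /s2 /= opprB addrC subrK.
Qed.

Lemma O_eq D A B D' A' B' : O (mk D A B) -> D = D' -> A = A' -> B = B' -> O (mk D' A' B').
Proof. by move=> h <- <- <-. Qed.

Lemma O_neg D a b : O (mk D (-a) (-b)) -> O (mk D a b).
Proof.
move=> H.
do 3 (apply: O_s1; rewrite s1mk; apply: O_s2; rewrite s2mk).
eapply O_eq; [exact H|ring..].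
Qed.

Lemma nr_int (n : nat) : nr n = (n%:Z)%:~R.
Proof. by rewrite /nr pmulrn. Qed.

Ltac wt_tac := rewrite /mk ?nr_int; congr Wt; rewrite ?intrN ?intrD ?intrB ?intrM /=; field.

Lemma fE1 k n : (n < k)%N -> f k n = mk (-(2 * n%:Z + 1)) (-(n%:Z + k%:Z + 1)) (-(2 * k%:Z + 1)).
Proof. by move=> h; rewrite /f h; wt_tac. Qed.

Lemma fE2 k : f k k = mk (-(2 * k%:Z + 1)) (-(2 * k%:Z + 1)) (-(2 * k%:Z + 1)).
Proof. by rewrite /f ltnn eqxx; wt_tac. Qed.

Lemma fE3 k n : (k < n)%N -> (n <= 3 * k)%N ->
  f k n = mk (-(2 * n%:Z + 1)) (-(2 * k%:Z + 1)) (-(n%:Z + k%:Z + 1)).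
Proof.
move=> h1 h2; rewrite /f ltnNge (ltnW h1) /= gtn_eqF // h2; by wt_tac.
Qed.

Lemma fE4 k : f k (3 * k).+1 = mk (-(6 * k%:Z + 3)) (-(2 * k%:Z + 1)) (-(4 * k%:Z + 2)).
Proof.
have h1 : ~~ ((3 * k).+1 < k)%N by lia.
have h2 : ((3 * k).+1 == k) = false by apply/eqP; lia.
have h3 : ~~ ((3 * k).+1 <= 3 * k)%N by lia.
by rewrite /f (negbTE h1) h2 (negbTE h3) eqxx; wt_tac.
Qed.

Lemma fE5 k n : ((3 * k).+1 < n)%N ->
  f k n = mk (-(2 * n%:Z + 1)) (-(n%:Z - k%:Z)) (-(n%:Z + k%:Z + 1)).
Proof.
move=> h.
have h1 : ~~ (n < k)%N by lia.
have h2 : (n == k) = false by apply/eqP; lia.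
have h3 : ~~ (n <= 3 * k)%N by lia.
have h4 : (n == (3 * k).+1) = false by apply/eqP; lia.
by rewrite /f (negbTE h1) h2 (negbTE h3) h4; wt_tac.
Qed.

Lemma Of k n : O (f k n).
Proof. by exists k, id, n; split => //; constructor. Qed.

Lemma core k n : O (mk (-(2 * n%:Z + 1)) (-(n%:Z + k%:Z + 1)) (-(2 * k%:Z + 1))).
Proof.
case: (ltngtP n k) => h.
- by rewrite -fE1 //; apply: Of.
- case h2: (n <= 3 * k)%N.
    by apply: O_s1; rewrite s1mk -fE3 //; apply: Of.
  case h3: (n == (3 * k).+1).
    move/eqP: h3 => ->; apply: O_s1; rewrite s1mk.
    have := Of k (3 * k).+1; rewrite fE4 => H; eapply O_eq; [exact H|lia..].
  apply: O_s1; rewrite s1mk; apply: O_s2; rewrite s2mk.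
  have := Of k n; rewrite fE5; last by move/negbT: h2; move/negbT: h3; lia.
  move=> H; eapply O_eq; [exact H|lia..].
- subst n; have := Of k k; rewrite fE2 => H; eapply O_eq; [exact H|lia..].
Qed.

Definition oddz (D : int) := exists z, D = 2 * z + 1.

Lemma natz_ex (z : int) : 0 <= z -> exists n : nat, z = n%:Z.
Proof. by case: z => [n|n] // _; exists n. Qed.

Lemma red1 D A B : oddz D -> D = 2 * A - B -> D < 0 -> B < 0 -> O (mk D A B).
Proof.
move=> [z hz] h1 h2 h3.
have [n hn] := natz_ex (- z - 1) ltac:(lia).
have [k hk] := natz_ex (z - A) ltac:(lia).
eapply O_eq; [exact (core k n)|lia..].
Qed.

Lemma red2 D A B : oddz D -> D = 2 * A - B -> D < 0 -> O (mk D A B).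
Proof.
move=> od h1 h2; case: (ltrgt0P B) => h3.
- apply: O_s2; rewrite s2mk; apply: O_neg.
  apply: red1 => //; lia.
- by apply: red1.
- move: od => [z hz]; lia.
Qed.

Lemma red3 D A B : oddz D -> D = 2 * A - B -> O (mk D A B).
Proof.
move=> od h1; case: (ltrgt0P D) => h2.
- apply: O_s0; rewrite s0mk; apply: O_neg; apply: red2; try lia.
  by case: od => z hz; exists (- z - 1); lia.
- by apply: red2.
- move: od => [z hz]; lia.
Qed.

Lemma red4 D A B : oddz D -> D = 2 * A - B \/ D = - (2 * A - B) -> O (mk D A B).
Proof.
move=> od [h|h]; first by apply: red3.
apply: O_s0; rewrite s0mk; apply: red3; last by lia.
by case: od => z hz; exists (- z - 1); lia.
Qed.

Definition atypz (D A B : int) :=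
  D = 2 * A - B \/ D = - (2 * A - B) \/ D = 2 * B - A \/ D = - (2 * B - A) \/
      D = - A - B \/ D = A + B.

Lemma red6 D A B : oddz D -> atypz D A B -> O (mk D A B).
Proof.
move=> od [h|[h|[h|[h|[h|h]]]]]; try (apply: red4; by [|lia]).
- apply: O_s1; rewrite s1mk; apply: red4; by [|lia].
- apply: O_s1; rewrite s1mk; apply: red4; by [|lia].
- apply: O_s2; rewrite s2mk; apply: O_s1; rewrite s1mk; apply: red4; by [|lia].
- apply: O_s2; rewrite s2mk; apply: O_s1; rewrite s1mk; apply: red4; by [|lia].
Qed.

Definition Iz (D A B : int) := 4 * (A * A - A * B + B * B) - D * D.

Lemma oddzN D : oddz D -> oddz (- D).
Proof. by case=> z hz; exists (- z - 1); lia. Qed.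

Lemma inW_mk sg : inW sg -> forall D A B, oddz D -> atypz D A B ->
  exists D' A' B', sg (mk D A B) = mk D' A' B' /\ oddz D' /\ atypz D' A' B' /\ Iz D' A' B' = Iz D A B.
Proof.
elim=> [|g _ IH|g _ IH|g _ IH] D A B od ht.
- by exists D, A, B.
- have [D' [A' [B' [e [o [a i]]]]]] := IH D A B od ht.
  exists (- D'), A', B'; rewrite /= e s0mk; split => //; split; first exact: oddzN.
  split; first by rewrite /atypz in a *; lia.
  by rewrite -i /Iz; ring.
- have [D' [A' [B' [e [o [a i]]]]]] := IH D A B od ht.
  exists D', B', A'; rewrite /= e s1mk; split => //; split => //.
  split; first by rewrite /atypz in a *; lia.
  by rewrite -i /Iz; ring.
- have [D' [A' [B' [e [o [a i]]]]]] := IH D A B od ht.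
  exists D', (B' - A'), B'; rewrite /= e s2mk; split => //; split => //.
  split; first by rewrite /atypz in a *; lia.
  by rewrite -i /Iz; ring.
Qed.

Lemma f_mk k n : exists D A B, f k n = mk D A B /\ oddz D /\ atypz D A B /\
  Iz D A B = 3 * (2 * k%:Z + 1) * (2 * k%:Z + 1).
Proof.
case: (ltngtP n k) => h.
- rewrite fE1 //; do 3 eexists; split; first reflexivity.
  split; first by exists (- n%:Z - 1); lia.
  split; first by rewrite /atypz; lia.
  by rewrite /Iz; ring.
- case h2: (n <= 3 * k)%N.
    rewrite fE3 //; do 3 eexists; split; first reflexivity.
    split; first by exists (- n%:Z - 1); lia.
    split; first by rewrite /atypz; lia.
    by rewrite /Iz; ring.
  case h3: (n == (3 * k).+1).
    move/eqP: h3 => ->; rewrite fE4; do 3 eexists; split; first reflexivity.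
    split; first by exists (- 3 * k%:Z - 2); lia.
    split; first by rewrite /atypz; lia.
    by rewrite /Iz; ring.
  rewrite fE5; last by move/negbT: h2; move/negbT: h3; lia.
  do 3 eexists; split; first reflexivity.
  split; first by exists (- n%:Z - 1); lia.
  split; first by rewrite /atypz; lia.
  by rewrite /Iz; ring.
- subst n; rewrite fE2; do 3 eexists; split; first reflexivity.
  split; first by exists (- k%:Z - 1); lia.
  split; first by rewrite /atypz; lia.
  by rewrite /Iz; ring.
Qed.

Lemma inXrho_mk x : inXrho x -> exists D A B, x = mk D A B /\ oddz D.
Proof.
case: x => d a b [[z0 h0] [z1 h1] [z2 h2]]; simpl in h0, h1, h2.
exists (2 * z0 - 5), (z1 + 2), (z2 + 3); split; last by exists (z0 - 3); lia.
have -> : d = z0%:~R - 5%:R / 2%:R by rewrite -h0; ring.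
have -> : a = z1%:~R + 2 by rewrite -h1; ring.
have -> : b = z2%:~R + 3 by rewrite -h2; ring.
by wt_tac.
Qed.

Lemma mk_inXrho D A B : oddz D -> inXrho (mk D A B).
Proof.
case=> z ->; split; [exists (z + 3) | exists (A - 2) | exists (B - 3)];
  by rewrite /= ?intrD ?intrB ?intrM; field.
Qed.

Lemma zeq (q : rat) (z : int) : q = z%:~R -> q = 0 -> z = 0.
Proof. by move=> -> /eqP; rewrite intr_eq0 => /eqP. Qed.
Lemma zeq2 (q : rat) (z : int) : q = z%:~R -> z = 0 -> q = 0.
Proof. by move=> -> ->. Qed.

Ltac cv := rewrite /form /mk /= ?intrD ?intrB ?intrN ?intrM; field; done.

Lemma formD x y : Defs.form x (wadd delta y) = - 2 * wd x + Defs.form x y.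
Proof. rewrite /Defs.form; cbn [wadd wd we1 we2 delta]; ring. Qed.
Lemma formN x y : Defs.form x (wopp y) = - Defs.form x y.
Proof. rewrite /Defs.form; cbn [wopp wd we1 we2]; ring. Qed.
Lemma form1 D A B : Defs.form (mk D A B) eps1 = (2 * A - B)%:~R.
Proof. rewrite /Defs.form /mk; cbn [wd we1 we2 eps1]; rewrite intrB intrM; ring. Qed.
Lemma form2 D A B : Defs.form (mk D A B) eps2 = (2 * B - A)%:~R.
Proof. rewrite /Defs.form /mk; cbn [wd we1 we2 eps2]; rewrite intrB intrM; ring. Qed.
Lemma form3 D A B : Defs.form (mk D A B) eps3 = (- A - B)%:~R.
Proof. rewrite /Defs.form /mk; cbn [wd we1 we2 eps3]; rewrite intrB intrN; ring. Qed.
Lemma wdmk D A B : - 2 * wd (mk D A B) = (- D)%:~R.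
Proof. by rewrite /mk; cbn [wd]; rewrite intrN; field. Qed.

Lemma ieq0 (z : int) : ((z%:~R : rat) = 0) <-> z = 0.
Proof. by split => [/eqP|->//]; rewrite intr_eq0 => /eqP. Qed.

Lemma atyp_mk D A B : atypical (mk D A B) <-> atypz D A B.
Proof.
rewrite /atypz; split.
- case=> -[[|[|[|i]]] Hi] // [[]] ; cbn beta iota zeta delta [nth nat_of_ord];
  rewrite formD ?formN wdmk ?form1 ?form2 ?form3 -?intrN -intrD ieq0; lia.
- case=> [h|[h|[h|[h|[h|h]]]]];
  [exists (@Ordinal 3 0 isT), true | exists (@Ordinal 3 0 isT), false
  |exists (@Ordinal 3 1 isT), true | exists (@Ordinal 3 1 isT), false
  |exists (@Ordinal 3 2 isT), true | exists (@Ordinal 3 2 isT), false];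
  cbn beta iota zeta delta [nth nat_of_ord];
  rewrite formD ?formN wdmk ?form1 ?form2 ?form3 -?intrN -intrD ieq0; lia.
Qed.

Lemma WT_mk k x : WT k x -> exists D A B, x = mk D A B /\ oddz D /\ atypz D A B /\
  Iz D A B = 3 * (2 * k%:Z + 1) * (2 * k%:Z + 1).
Proof.
move=> [sg [n [hs ->]]].
have [D [A [B [e [o [a i]]]]]] := f_mk k n.
have [D' [A' [B' [e' [o' [a' i']]]]]] := @inW_mk sg hs D A B o a.
by exists D', A', B'; rewrite e e' i' i.
Qed.

Lemma sq_inj (k1 k2 : nat) :
  3 * (2 * k1%:Z + 1) * (2 * k1%:Z + 1) = 3 * (2 * k2%:Z + 1) * (2 * k2%:Z + 1) -> k1 = k2.
Proof.
move=> E.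
have : (k1%:Z - k2%:Z) * (k1%:Z + k2%:Z + 1) = 0 by lia.
move/eqP; rewrite mulf_eq0 => /orP [/eqP h|/eqP h]; lia.
Qed.

Theorem lemma3p3 :
  (forall k1 k2 : nat, k1 <> k2 -> forall x : wt, ~ (WT k1 x /\ WT k2 x)) /\
  (forall x : wt, (exists k : nat, WT k x) <-> (inXrho x /\ atypical x)).
Proof.
split.
- move=> k1 k2 hk x [/WT_mk [D [A [B [e [_ [_ i]]]]]] /WT_mk [D' [A' [B' [e' [_ [_ i']]]]]]].
  apply: hk; apply: sq_inj; rewrite -i -i'.
  by have [-> -> ->] := mk_inj _ _ _ _ _ _ (etrans (esym e) e').
- move=> x; split.
  + move=> [k /WT_mk [D [A [B [-> [o [a _]]]]]]]; split; first exact: mk_inXrho.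
    by apply/atyp_mk.
  + move=> [/inXrho_mk [D [A [B [-> o]]]] /atyp_mk a].
    exact: red6.
Qed.
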